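(* Let $(C,d)$ be a finitely generated chain complex with two filtrations given by filtration degree functions $p$ and $p'$ such that for every $x\in C$ the difference $p'(x)-p(x)$ is either $0$ or $1$. If the $p'$-spectral sequence collapses on page $l$, then the $p$-spectral sequence collapses on page $l+1$; i.e. the $p$-spectral sequence collapses at most one page after the $p'$-spectral sequence does.
   Context: A filtration on $C$ is a function $p:C\to\mathbb{Z}\cup\{-\infty\}$ with $p(x-y)\le\max(p(x),p(y))$ and $p(dx)\le p(x)$; write $C^k=\{x:p(x)\le k\}$. Define $Z^k_r=\{x\in C^k: dx\in C^{k-r}\}$, $B^k_r=\{dy\in C^k: y\in C^{k+r}\}$, and the pages $E^k_r=Z^k_r/(Z^{k-1}_{r-1}+B^k_{r-1})$ with differential $d_r[x]=[dx]:E^k_r\to E^{k-r}_r$. The spectral sequence collapses on page $l$ if $d_r=0$ for all $r\ge l$. *)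

(* Defs.v *)
From HB Require Import structures.
From mathcomp Require Import all_boot all_order all_algebra.
Set Implicit Arguments. Unset Strict Implicit. Unset Printing Implicit Defensive.
Import Order.TTheory GRing.Theory Num.Theory.
Local Open Scope ring_scope.

(* Z ∪ {-oo} is represented by [option int], with [None] = -oo. *)
Definition zle (a b : option int) : bool :=
  match a, b with
  | None, _ => true
  | Some _, None => false
  | Some x, Some y => x <= y
  end.

Definition zmax (a b : option int) : option int :=
  match a, b with
  | None, _ => b
  | _, None => a
  | Some x, Some y => Some (Num.max x y)
  end.

Definition zsucc (a : option int) : option int := omap (fun n => n + 1) a.

Section Filtered.
Variables (R : nzRingType) (C : lmodType R) (d : {linear C -> C}).

Definition finitely_generated : Prop :=
  exists s : seq C, forall x : C,
    exists c : 'I_(size s) -> R, x = \sum_(i < size s) c i *: s`_i.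

Definition is_complex : Prop := forall x : C, d (d x) = 0.

Definition is_filtration (p : C -> option int) : Prop :=
  (forall x y, zle (p (x - y)) (zmax (p x) (p y))) /\
  (forall x, zle (p (d x)) (p x)).

Definition Cfil (p : C -> option int) (k : int) (x : C) : Prop :=
  zle (p x) (Some k).

Definition Zfil (p : C -> option int) (k r : int) (x : C) : Prop :=
  Cfil p k x /\ Cfil p (k - r) (d x).

Definition Bfil (p : C -> option int) (k r : int) (z : C) : Prop :=
  exists y, z = d y /\ Cfil p k z /\ Cfil p (k + r) y.

(* The differential d_r : E^k_r -> E^{k-r}_r, E^k_r = Z^k_r/(Z^{k-1}_{r-1}+B^k_{r-1}),
   vanishes: for every x in Z^k_r, the class of dx in E^{k-r}_r is zero, i.e.
   dx lies in Z^{k-r-1}_{r-1} + B^{k-r}_{r-1}. *)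
Definition dr_zero (p : C -> option int) (r : nat) : Prop :=
  forall (k : int) (x : C), Zfil p k r%:Z x ->
    exists a b, Zfil p (k - r%:Z - 1) (r%:Z - 1) a /\
                Bfil p (k - r%:Z) (r%:Z - 1) b /\ d x = a + b.

Definition collapses_on (p : C -> option int) (l : nat) : Prop :=
  forall r : nat, (l <= r)%N -> dr_zero p r.

End Filtered.

(* Main.v *)
Require Import Defs.
From HB Require Import structures.
From mathcomp Require Import all_boot all_order all_algebra.
From mathcomp Require Import zify.
Import GRing.Theory.
Local Open Scope ring_scope.
Import Order.TTheory Num.Theory.

Lemma zle_trans a b c : zle a b -> zle b c -> zle a c.
Proof. case: a => [a|] //; case: b => [b|] //; case: c => [c|] //= ; exact: le_trans. Qed.

Lemma zle_max a b c : zle a c -> zle b c -> zle (zmax a b) c.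
Proof.
case: a => [a|] //; case: b => [b|] //; case: c => [c|] //= h1 h2.
by rewrite ge_max h1 h2.
Qed.

Lemma zle_mono a i j : zle a (Some i) -> i <= j -> zle a (Some j).
Proof. case: a => [a|] //= h1 h2; exact: le_trans h1 h2. Qed.

Arguments zle_trans {a b c}.
Arguments zle_max {a b c}.
Arguments zle_mono {a i j}.

Section S.
Variables (R : nzRingType) (C : lmodType R) (p : C -> option int).
Hypothesis hp1 : forall x y, zle (p (x - y)) (zmax (p x) (p y)).
Hypothesis p0 : p 0 = None.

Lemma pN y : zle (p (- y)) (p y).
Proof. by have := hp1 0 y; rewrite add0r p0. Qed.

Lemma pB x y j : Cfil p j x -> Cfil p j y -> Cfil p j (x - y).
Proof. rewrite /Cfil => hx hy; exact: zle_trans (hp1 x y) (zle_max hx hy). Qed.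

Lemma pD x y j : Cfil p j x -> Cfil p j y -> Cfil p j (x + y).
Proof.
move=> hx hy; rewrite -[y]opprK; apply: pB => //.
rewrite /Cfil; exact: zle_trans (pN y) hy.
Qed.
End S.
Arguments pB {R C p} hp1 {x y j}.
Arguments pD {R C p} hp1 p0 {x y j}.

Theorem proposition4p1 (R : nzRingType) (C : lmodType R) (d : {linear C -> C})
  (p p' : C -> option int) (l : nat) :
  finitely_generated C -> is_complex d ->
  is_filtration d p -> is_filtration d p' ->
  (forall x : C, p' x = p x \/ p' x = zsucc (p x)) ->
  collapses_on d p' l -> collapses_on d p l.+1.
Proof.
move=> _ hc [hp1 hp2] [hq1 hq2] hpq hcol.
have Cp'p : forall j x, Cfil p' j x -> Cfil p j x.
  move=> j x; rewrite /Cfil; case: (hpq x) => [->|->]; first by [].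
  by case: (p x) => [n|] //=; lia.
have Cpp' : forall j x, Cfil p j x -> Cfil p' (j + 1) x.
  move=> j x; rewrite /Cfil; case: (hpq x) => [->|->]; case: (p x) => [n|] //=; lia.
have q0 : p' 0 = None.
  case E: (p' 0) => [m|] //.
  have [|a [b [[Ha _] [_ _]]]] := hcol l (leqnn l) (m + l%:Z) 0.
    by rewrite /Zfil /Cfil linear0 E /=; split; lia.
  have := hq1 a a; rewrite subrr E.
  move: Ha; rewrite /Cfil; case: (p' a) => [n|] //=; rewrite maxxx; lia.
have p0 : p 0 = None.
  by case: (hpq 0); rewrite q0 //; case: (p 0).
have step : forall (r' : nat) (K : int) z, (l <= r')%N -> Cfil p' K z ->
    Cfil p' (K - r'%:Z) (d z) ->
    exists a y, Cfil p' (K - r'%:Z - 1) a /\ Cfil p' (K - 1) y /\ d z = a + d y.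
  move=> r' K z hr hz hdz.
  have [a [b [[Ha _] [[y [-> [_ Hy]]] E]]]] := hcol r' hr K z (conj hz hdz).
  exists a, y; split => //; split => //.
  by apply: zle_mono Hy _; lia.
move=> r hr k x [Hx Hdx].
have hl1 : (l <= r)%N by apply: ltnW.
have Hx1 : Cfil p' (k + 1) x by apply: Cpp'.
have Hdx1 : Cfil p' (k + 1 - r%:Z) (d x).
  by apply: zle_mono (Cpp' _ _ Hdx) _; lia.
have [a1 [y1 [Ha1 [Hy1 E1]]]] := step r (k + 1) x hl1 Hx1 Hdx1.
have hl2 : (l <= r.+1)%N by apply: leqW.
have Hxy : Cfil p' (k + 1) (x - y1).
  by apply: (pB hq1) => //; apply: zle_mono Hy1 _; lia.
have Hdxy : Cfil p' (k + 1 - (r.+1)%:Z) (d (x - y1)).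
  have -> : d (x - y1) = a1 by rewrite linearB; apply/eqP; rewrite subr_eq; apply/eqP; exact: E1.
  by apply: zle_mono Ha1 _; lia.
have [a2 [y2 [Ha2 [Hy2 E2]]]] := step r.+1 (k + 1) (x - y1) hl2 Hxy Hdxy.
set z := y1 + y2.
have Hz : Cfil p' k z.
  apply: (pD hq1 q0); [apply: zle_mono Hy1 _ | apply: zle_mono Hy2 _]; lia.
have Edx : d x = a2 + d z.
  by rewrite /z linearD addrCA -E2 linearB addrC addrNK.
have Ha2p : Cfil p (k - r%:Z - 1) a2 by apply: Cp'p; apply: zle_mono Ha2 _; lia.
have Hdz : Cfil p (k - r%:Z) (d z).
  have -> : d z = d x - a2 by rewrite Edx addrC addKr.
  apply: (pB hp1) => //; apply: zle_mono Ha2p _; lia.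
have hl3 : (l <= r.-1)%N by case: (r) hr.
have hr1 : (r.-1)%:Z = r%:Z - 1 by case: (r) hr => // n _; rewrite /= intS; lia.
have Hdz1 : Cfil p' (k - (r.-1)%:Z) (d z).
  by rewrite hr1; apply: zle_mono (Cpp' _ _ Hdz) _; lia.
have [a3 [y3 [Ha3 [Hy3 E3]]]] := step r.-1 k z hl3 Hz Hdz1.
have Hzy : Cfil p' k (z - y3).
  by apply: (pB hq1) => //; apply: zle_mono Hy3 _; lia.
have Hdzy : Cfil p' (k - r%:Z) (d (z - y3)).
  have -> : d (z - y3) = a3 by rewrite linearB; apply/eqP; rewrite subr_eq; apply/eqP; exact: E3.
  by apply: zle_mono Ha3 _; rewrite hr1; lia.
have [a4 [y4 [Ha4 [Hy4 E4]]]] := step r k (z - y3) hl1 Hzy Hdzy.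
have Edx2 : d x = (a2 + a4) + d (y3 + y4).
  rewrite Edx -[d z](addrNK (d y3)) -linearB E4 linearD.
  by rewrite -!addrA; congr (_ + _); rewrite [d y4 + _]addrC addrA.
have Ha : Cfil p (k - r%:Z - 1) (a2 + a4).
  apply: (pD hp1 p0) => //; apply: Cp'p => //.
have Hy : Cfil p (k - 1) (y3 + y4) by apply: Cp'p; apply: (pD hq1 q0).
exists (a2 + a4), (d (y3 + y4)); split; last split => //.
- split => //.
  have -> : d (a2 + a4) = 0.
    have -> : a2 + a4 = d x - d (y3 + y4) by rewrite Edx2 addrK.
    by rewrite linearB !hc subr0.
  by rewrite /Cfil p0.
- exists (y3 + y4); split => //; split.
    have -> : d (y3 + y4) = d x - (a2 + a4) by rewrite Edx2 [_ + d _]addrC addrK.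
    apply: (pB hp1) => //; apply: zle_mono Ha _; lia.
  by apply: zle_mono Hy _; lia.
Qed.
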